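(* Let $P$ be a simplicial poset of rank $n+1$. Then $$\Theta(\Psi(P))=[n]!\cdot h(P),$$ where $h(P)$ is the $h$-polynomial of $P$.
   Context: A graded poset $P$ with minimum $\hat0$, maximum $\hat1$ and rank function $\rho$ is simplicial if for every $x<\hat1$ the interval $[\hat0,x]$ is isomorphic to the Boolean algebra of rank $\rho(x)$. For $P$ of rank $n+1$, let $f_0=1$ and, for $1\le i\le n$, $f_i$ be the number of elements of rank $i$; the $h$-polynomial is $h(P)=\sum_{i=0}^n f_i\, q^i(1-q)^{n-i}$. The $\mathbf{a}\mathbf{b}$-index is $\Psi(P)=\sum_{S\subseteq\{1,\dots,n\}} f_S\, v_S$, where for $S=\{s_1<\cdots<s_k\}$, $f_S$ is the number of chains $\hat0<x_1<\cdots<x_k<\hat1$ with $\rho(x_i)=s_i$, and $v_S=v_1\cdots v_n$ with $v_i=\mathbf{b}$ if $i\in S$, $v_i=\mathbf{a}-\mathbf{b}$ otherwise ($\mathbf{a},\mathbf{b}$ non-commuting variables). The Major MacMahon map $\Theta:\mathbb{Z}\langle\mathbf{a},\mathbf{b}\rangle\to\mathbb{Z}[q]$ is linear with $\Theta(u_1\cdots u_n)=\prod_{i:\,u_i=\mathbf{b}}q^i$ on monomials. $[m]=1+q+\cdots+q^{m-1}$, $[m]!=[m]\cdots[1]$, $[0]!=1$. *)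

(* Defs.v *)
From HB Require Import structures.
From mathcomp Require Import all_boot all_order all_algebra.
Set Implicit Arguments. Unset Strict Implicit. Unset Printing Implicit Defensive.
Import Order.TTheory GRing.Theory.

Section Defs.
Local Open Scope order_scope.
Context {d : Order.disp_t} {T : finTBPOrderType d}.

Definition covers (x y : T) : bool := (x < y) && [forall z, ~~ ((x < z) && (z < y))].

Definition graded (rk : T -> nat) : Prop :=
  rk \bot = 0%N /\ (forall x y, covers x y -> rk y = (rk x).+1).

Definition simplicial (rk : T -> nat) : Prop :=
  forall x : T, x < \top ->
    exists f : {set 'I_(rk x)} -> T,
      injective f /\
      (forall y : T, (\bot <= y <= x) <-> exists A, f A = y) /\
      (forall A B, (f A <= f B) = (A \subset B)).

Definition fnum (rk : T -> nat) (i : nat) : nat :=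
  if i == 0%N then 1%N else #|[set x : T | rk x == i]|.

(** f_S for S a subset of {1..n}, encoded as S : {set 'I_n} (i stands for i+1):
    chains \bot < x_1 < ... < x_k < \top with rk x_j = s_j *)
Definition fS (rk : T -> nat) (n : nat) (S : {set 'I_n}) : nat :=
  #|[set x : {ffun 'I_#|S| -> T} |
      [forall j : 'I_#|S|, (rk (x j) == (nat_of_ord (enum_val j)).+1)
                 && (\bot < x j) && (x j < \top)]
      && [forall j : 'I_#|S|, forall j' : 'I_#|S|, (j < j')%N ==> (x j < x j')]]|.
End Defs.

Local Open Scope ring_scope.

(** Elements of Z<a,b> as formal Z-linear combinations of words in {a,b};
    a letter is a bool: false = a, true = b. *)
Definition ncpoly := seq (int * seq bool).
Definition nc_a : ncpoly := [:: (1, [:: false])].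
Definition nc_b : ncpoly := [:: (1, [:: true])].
Definition nc_one : ncpoly := [:: (1, [::])].
Definition nc_scale (c : int) (p : ncpoly) : ncpoly := [seq (c * m.1, m.2) | m <- p].
Definition nc_add (p q : ncpoly) : ncpoly := p ++ q.
Definition nc_sub (p q : ncpoly) : ncpoly := p ++ nc_scale (-1) q.
Definition nc_mul (p q : ncpoly) : ncpoly :=
  [seq (m.1 * m'.1, m.2 ++ m'.2) | m <- p, m' <- q].
Definition nc_prod (ps : seq ncpoly) : ncpoly := foldr nc_mul nc_one ps.
Definition nc_sum (ps : seq ncpoly) : ncpoly := foldr nc_add [::] ps.

Definition Theta (p : ncpoly) : {poly int} :=
  \sum_(m <- p) m.1%:P * \prod_(i < size m.2 | nth false m.2 i) 'X^(i.+1).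

Definition vS (n : nat) (S : {set 'I_n}) : ncpoly :=
  nc_prod [seq (if i \in S then nc_b else nc_sub nc_a nc_b) | i <- enum 'I_n].

Definition abindex {d : Order.disp_t} {T : finTBPOrderType d} (rk : T -> nat) (n : nat)
  : ncpoly :=
  nc_sum [seq nc_scale (fS rk A)%:Z (vS A) | A <- enum {set 'I_n}].

Definition hpoly {d : Order.disp_t} {T : finTBPOrderType d} (rk : T -> nat) (n : nat)
  : {poly int} :=
  \sum_(i < n.+1) (fnum rk i)%:R * 'X^i * (1 - 'X) ^+ (n - i).

Definition qint (m : nat) : {poly int} := \sum_(i < m) 'X^i.
Definition qfact (m : nat) : {poly int} := \prod_(i < m) qint i.+1.

(* Main.v *)
Require Import Defs.
From mathcomp Require Import all_boot all_order all_algebra.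
From mathcomp Require Import ring.
Import Order.TTheory GRing.Theory.
Set Implicit Arguments. Unset Strict Implicit. Unset Printing Implicit Defensive.

Lemma enum_val_mono n (A : {set 'I_n}) (j j' : 'I_#|A|) :
  (j < j')%N -> (enum_val j < enum_val j')%N.
Proof.
move=> jj.
have tr : transitive (relpre (@nat_of_ord n) ltn).
  by move=> a b c /= h1 h2; apply: ltn_trans h2.
have so : sorted (relpre (@nat_of_ord n) ltn) (enum A).
  rewrite /enum_mem -enumT /=.
  apply: sorted_filter => //.
  by rewrite -sorted_map val_enum_ord iota_ltn_sorted.
rewrite (enum_val_nth (enum_val j)) (enum_val_nth (enum_val j) j').
apply: (sorted_ltn_nth tr) => //; rewrite inE -cardE ltn_ord //.
Qed.

Section Poset.
Local Open Scope order_scope.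
Context {d : Order.disp_t} {T : finTBPOrderType d} (rk : T -> nat).
Hypothesis grk : graded rk.

Lemma rk_lt_aux N : forall x y : T,
  leq #|[set w | (y < w) && (w < x)]| N -> y < x -> (rk y < rk x)%N.
Proof.
elim: N => [|N IH] x y hc yx.
  have cov : covers y x.
    apply/andP; split=> //; apply/forallP=> z; apply/negP=> hz.
    have hin : z \in [set w | (y < w) && (w < x)] by rewrite inE.
    by move: hc; rewrite leqn0 => /eqP/cards0_eq hc; rewrite hc inE in hin.
  by rewrite (proj2 grk _ _ cov).
case: (boolP [exists z, (y < z) && (z < x)]) => [/existsP [z /andP [yz zx]]|nz].
  have h1 : (rk y < rk z)%N.
    apply: (IH z y) => //; rewrite -ltnS; apply: leq_trans hc; apply: proper_card.
    apply/properP; split.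
      by apply/subsetP=> w; rewrite !inE => /andP [-> /lt_trans ->].
    by exists z; rewrite !inE ?yz ?zx // ltxx andbF.
  have h2 : (rk z < rk x)%N.
    apply: (IH x z) => //; rewrite -ltnS; apply: leq_trans hc; apply: proper_card.
    apply/properP; split.
      by apply/subsetP=> w; rewrite !inE => /andP [/(lt_trans yz) -> ->].
    by exists z; rewrite !inE ?yz ?zx // ltxx.
  exact: ltn_trans h2.
have cov : covers y x.
  apply/andP; split=> //; apply/forallP=> z; apply/negP=> hz.
  by move/negP: nz; apply; apply/existsP; exists z.
by rewrite (proj2 grk _ _ cov).
Qed.

Lemma rk_lt (x y : T) : y < x -> (rk y < rk x)%N.
Proof. exact: rk_lt_aux. Qed.

Lemma rk_le (x y : T) : y <= x -> (rk y <= rk x)%N.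
Proof. by rewrite le_eqVlt => /orP [/eqP -> //|/rk_lt /ltnW]. Qed.

Lemma rk_bot : rk \bot = 0%N.
Proof. exact: (proj1 grk). Qed.

Lemma rk_gt0 (y : T) : \bot < y -> (0 < rk y)%N.
Proof. by move/rk_lt; rewrite rk_bot. Qed.

Lemma rk0 (y : T) : rk y = 0%N -> y = \bot.
Proof.
move=> h; apply/eqP; rewrite -[_ == _]negbK -lt0x; apply/negP=> /rk_gt0.
by rewrite h.
Qed.

Lemma chain_eq (a b : T) : (a <= b) || (b <= a) -> rk a = rk b -> a = b.
Proof.
move=> /orP [] h e; apply/eqP; apply/negPn/negP=> ne.
  by have := rk_lt (y:=a) (x:=b); rewrite lt_neqAle ne h e ltnn => /(_ isT).
by have := rk_lt (y:=b) (x:=a); rewrite lt_neqAle eq_sym ne h e ltnn => /(_ isT).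
Qed.


Lemma count_le (x : T) : simplicial rk -> x < \top ->
  forall j, #|[set y | (y <= x) && (rk y == j)]| = 'C(rk x, j).
Proof.
move=> simp xt j.
have [f [finj [fint ford]]] := simp x xt.
have fle A : f A <= x by have /(proj2 (fint (f A))) /andP [] : exists B, f B = f A by exists A.
have f0 : f set0 = \bot.
  have [A0 hA0] : exists A, f A = \bot by apply/(fint \bot); rewrite !le0x.
  by apply/le_anti; rewrite le0x -hA0 ford sub0set.
have flt A B : (f A < f B) = (A \proper B).
  by rewrite lt_neqAle ford properEneq (inj_eq finj) eq_sym.
have cov (A : {set _}) a : a \notin A -> covers (f A) (f (a |: A)).
  move=> aA; apply/andP; split.
    rewrite flt properEneq subsetUr andbT; apply/eqP=> e.
    by move: (setU11 a A); rewrite -e (negbTE aA).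
  apply/forallP=> z; apply/negP=> /andP [h1 h2].
  have [C hC] : exists C, f C = z.
    by apply/(fint z); rewrite le0x /=; apply/(le_trans (ltW h2))/fle.
  rewrite -hC !flt in h1 h2.
  have := proper_card h1; have := proper_card h2.
  by rewrite cardsU1 aA add1n ltnS => /leq_ltn_trans h /h; rewrite ltnn.
have frk0 k (A : {set _}) : #|A| = k -> rk (f A) = k.
  elim: k A => [|k IH] A hA.
    by move/cards0_eq: hA => ->; rewrite f0 rk_bot.
  have [a aA] : exists a, a \in A by apply/card_gt0P; rewrite hA.
  have e : A = a |: (A :\ a) by rewrite setD1K.
  rewrite e (proj2 grk _ _ (cov _ a (negbT (setD11 a A)))) (IH (A :\ a)) //.
  by move: hA; rewrite (cardsD1 a A) aA add1n => -[].
have frk (A : {set _}) : rk (f A) = #|A| by apply: frk0.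
have -> : [set y | (y <= x) && (rk y == j)] = f @: [set A : {set 'I_(rk x)} | #|A| == j].
  apply/setP=> y; rewrite inE; apply/andP/imsetP.
    move=> [yx /eqP ry].
    have [A hA] : exists A, f A = y by apply/(fint y); rewrite le0x yx.
    by exists A; rewrite // inE -frk hA ry.
  by move=> [A]; rewrite inE => /eqP hA ->; rewrite fle frk hA.
by rewrite card_imset // card_draws card_ord.
Qed.

End Poset.

Section Chains.
Context {d : Order.disp_t} {T : finTBPOrderType d} (rk : T -> nat).
Hypothesis grk : graded rk.
Local Open Scope ring_scope.

Definition is_chain (C : {set T}) : bool :=
  [forall a in C, forall b in C, (a <= b)%O || (b <= a)%O].
Definition chains (x : T) : {set {set T}} :=
  [set C : {set T} | (C \subset [set y | (\bot < y)%O && (y < x)%O]) && is_chain C].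
Definition tm (C : {set T}) (i : nat) : {poly int} :=
  if [exists c in C, rk c == i] then 'X^i else 1 - 'X^i.
Definition wt (C : {set T}) (m : nat) : {poly int} := \prod_(1 <= i < m) tm C i.
Definition Fx (x : T) : {poly int} := \sum_(C in chains x) wt C (rk x).

Lemma wt_U1 (x y : T) (C : {set T}) : (\bot < y)%O -> (y < x)%O -> C \in chains y ->
  wt (y |: C) (rk x) = wt C (rk y) * 'X^(rk y) * \prod_((rk y).+1 <= i < rk x) (1 - 'X^i).
Proof.
move=> by0 yx; rewrite inE => /andP [/subsetP sC _].
have ry0 := rk_gt0 grk by0.
have ryx := rk_lt grk yx.
have rC c : c \in C -> (rk c < rk y)%N.
  by move/sC; rewrite inE => /andP [_ /(rk_lt grk)].
rewrite /wt (@big_cat_nat _ _ _ (rk y)) //=; last exact: ltnW.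
rewrite [\prod_(rk y <= i < rk x) _]big_ltn // mulrA; congr (_ * _ * _).
idtac.
- apply: eq_big_nat => i /andP [_ hi]; rewrite /tm.
  congr (if _ then _ else _); apply/existsP/existsP=> -[c /andP [hc /eqP hci]].
    move: hc; rewrite in_setU1 => /orP [/eqP ec|hc]; first by move: hi; rewrite -hci ec ltnn.
    by exists c; rewrite hc hci eqxx.
  by exists c; rewrite in_setU1 hc orbT hci eqxx.
- rewrite /tm; case: existsP => // -[]; exists y; by rewrite setU11 eqxx.
- apply: eq_big_nat => i /andP [hi _]; rewrite /tm.
  case: existsP => // -[c /andP [hc /eqP hci]].
  move: hc; rewrite in_setU1 => /orP [/eqP ec|hc]; first by move: hi; rewrite -hci ec ltnn.
  by move: (ltn_trans (rC c hc) hi); rewrite hci ltnn.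
Qed.


Lemma chain_max (C : {set T}) : is_chain C -> C != set0 ->
  exists2 y, y \in C & forall c, c \in C -> (c <= y)%O.
Proof.
move=> ch /set0Pn [c0 c0C].
have [y0 y0C ymax] := arg_maxnP rk c0C.
exists y0 => // c cC.
move/forallP: ch => /(_ c) /implyP /(_ cC) /forallP /(_ y0) /implyP /(_ y0C) /orP [//|].
rewrite le_eqVlt => /orP [/eqP -> //|/(rk_lt grk) h].
by have /= := ymax c cC; rewrite leqNgt h.
Qed.

Lemma Fx_rec (x : T) : Fx x = wt set0 (rk x) +
  \sum_(y | (\bot < y)%O && (y < x)%O) Fx y * 'X^(rk y) * \prod_((rk y).+1 <= i < rk x) (1 - 'X^i).
Proof.
have c0 : set0 \in chains x.
  by rewrite inE sub0set /is_chain; apply/forallP=> a; rewrite inE.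
rewrite /Fx (bigD1 set0) //=; congr (_ + _).
pose P y (C : {set T}) := (y \in C) && (C \subset [set c | (c <= y)%O]).
transitivity (\sum_(C in chains x | C != set0)
   \sum_(y | (\bot < y)%O && (y < x)%O) (if P y C then wt C (rk x) else 0)).
  apply: eq_bigr => C /andP [Cx Cn0].
  move: (Cx); rewrite inE => /andP [/subsetP sC ch].
  have [y0 y0C ymax] := chain_max ch Cn0.
  have : y0 \in [set y | (\bot < y)%O && (y < x)%O] by exact: sC.
  rewrite inE => hy0.
  rewrite (bigD1 y0) //= big1 ?addr0.
    rewrite /P y0C /=; case: subsetP => // -[] c cC; rewrite inE; exact: ymax.
  move=> y /andP [_ yy0]; rewrite /P; case: andP => // -[yC /subsetP sy].
  have := sy y0 y0C; rewrite inE => h1.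
  by move: yy0; rewrite (le_anti (andb_true_intro (conj (ymax y yC) h1))) eqxx.
rewrite exchange_big /=; apply: eq_bigr => y /andP [by0 yx].
rewrite -big_mkcondr /= -mulrA /Fx big_distrl /=.
rewrite (reindex_onto (fun C => y |: C) (fun C => C :\ y)) /=; last first.
  by move=> C /andP [_ /andP [yC _]]; rewrite setD1K.
transitivity (\sum_(C in chains y) wt (y |: C) (rk x)); last first.
  by apply: eq_bigr => C hC; rewrite (wt_U1 by0 yx hC) mulrA.
apply: eq_bigl => C; apply/idP/idP.
  move=> /andP [/andP [/andP [hx _] /andP [_ /subsetP hy]] /eqP he].
  have yC : y \notin C.
    apply/negP=> yC; move: (setD11 y (y |: C)); rewrite he yC //.
  move: hx; rewrite inE => /andP [/subsetP sx ch].
  rewrite inE; apply/andP; split.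
    apply/subsetP=> c cC.
    have cyC : c \in y |: C by rewrite in_setU1 cC orbT.
    have := hy c cyC; have := sx c cyC.
    rewrite !inE => /andP [-> _] cy /=.
    rewrite lt_neqAle cy andbT; apply/eqP=> e; by rewrite -e cC in yC.
  apply/forallP=> a; apply/implyP=> aC; apply/forallP=> b; apply/implyP=> bC.
  move/forallP: ch => /(_ a); rewrite in_setU1 aC orbT /= => /forallP /(_ b).
  by rewrite in_setU1 bC orbT.
rewrite inE => /andP [/subsetP sC ch].
have lty c : c \in C -> (c < y)%O by move/sC; rewrite inE => /andP [].
have yC : y \notin C by apply/negP=> /lty; rewrite ltxx.
rewrite setU1K // eqxx andbT /P setU11 /=.
have -> : (y |: C != set0) by apply/set0Pn; exists y; rewrite setU11.
rewrite andbT; apply/andP; split.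
  rewrite inE; apply/andP; split.
    apply/subsetP=> c; rewrite in_setU1 inE => /orP [/eqP ->|cC]; first by rewrite by0.
    have := sC c cC; rewrite inE => /andP [-> cy] /=; exact: lt_trans cy yx.
  apply/forallP=> a; apply/implyP; rewrite in_setU1 => /orP [/eqP ->|aC];
    apply/forallP=> b; apply/implyP; rewrite in_setU1 => /orP [/eqP ->|bC].
  - by rewrite lexx.
  - by rewrite (ltW (lty b bC)) orbT.
  - by rewrite (ltW (lty a aC)).
  - by move/forallP: ch => /(_ a) /implyP /(_ aC) /forallP /(_ b) /implyP /(_ bC).
apply/subsetP=> c; rewrite in_setU1 inE => /orP [/eqP ->|cC]; first exact: lexx.
exact: ltW (lty c cC).
Qed.
End Chains.
Local Open Scope ring_scope.

Lemma qfactS m : qfact m.+1 = qfact m * qint m.+1.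
Proof. by rewrite /qfact big_ord_recr. Qed.

Lemma qint_mul m : qint m * (1 - 'X) = 1 - 'X^m.
Proof.
elim: m => [|m IH]; first by rewrite /qint big_ord0 mul0r expr0 subrr.
rewrite /qint big_ord_recr /= -/(qint m) mulrDl IH exprS; ring.
Qed.

Lemma qfact_prod j k : (j <= k)%N ->
  qfact j * \prod_(j.+1 <= i < k.+1) (1 - 'X^i) = qfact k * (1 - 'X)^+(k - j).
Proof.
elim: k => [|k IH].
  by rewrite leqn0 => /eqP ->; rewrite big_geq // subnn expr0.
rewrite leq_eqVlt => /orP [/eqP ->|]; first by rewrite big_geq // subnn expr0.
rewrite ltnS => jk.
rewrite big_nat_recr //= mulrA IH // qfactS -qint_mul subSn // exprS; ring.
Qed.

Lemma oneX_neq0 : (1 - 'X : {poly int}) != 0.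
Proof.
apply/eqP=> /(congr1 (fun p : {poly int} => p`_0)).
by rewrite coefB coef1 coefX coef0 /= subr0 => /eqP; rewrite oner_eq0.
Qed.

Lemma binom_qint m :
  \sum_(j < m.+1) ('C(m.+1, j))%:R * 'X^j * (1 - 'X)^+(m - j) = qint m.+1 :> {poly int}.
Proof.
apply: (mulIf oneX_neq0); rewrite qint_mul big_distrl /=.
have := exprDn (1 - 'X : {poly int}) 'X m.+1.
rewrite subrK expr1n big_ord_recr /= subnn expr0 binn mul1r.
rewrite mulr1n => e; rewrite [in RHS]e addrK; apply: eq_bigr => i _.
rewrite subSn; last by rewrite -ltnS.
rewrite exprSr -mulr_natl.
ring.
Qed.

Section Main.
Context {d : Order.disp_t} {T : finTBPOrderType d} (rk : T -> nat).
Hypothesis grk : graded rk.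
Local Open Scope ring_scope.

Lemma sum_by_rank m (i0 : 'I_m) (P : pred T) (g : nat -> {poly int}) :
  (forall y, P y -> (rk y < m)%N) ->
  \sum_(y | P y) g (rk y) = \sum_(j < m) (#|[set y | P y && (rk y == j)]|)%:R * g j.
Proof.
move=> hP.
rewrite (partition_big (fun y => insubd i0 (rk y)) predT) //=.
apply: eq_bigr => j _.
rewrite mulr_natl -sumr_const.
apply: eq_big => y.
  rewrite inE; case Py: (P y) => //=.
  by rewrite -val_eqE /= val_insubd hP.
by move=> /andP [Py]; rewrite -val_eqE /= val_insubd hP // => /eqP <-.
Qed.

Definition gg (m j : nat) : {poly int} :=
  qfact j * 'X^j * \prod_(j.+1 <= i < m) (1 - 'X^i).

Lemma wt0 m : wt rk set0 m = \prod_(1 <= i < m) (1 - 'X^i).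
Proof.
apply: eq_big_nat => i _; rewrite /tm; case: existsP => // -[c].
by rewrite in_set0.
Qed.

Lemma Fx_sum x : x != \bot%O -> (forall y, (y < x)%O -> Fx rk y = qfact (rk y)) ->
  Fx rk x = \sum_(y | (y < x)%O) gg (rk x) (rk y).
Proof.
move=> xb IH; rewrite (Fx_rec grk) [RHS](bigD1 \bot%O) /=; last by rewrite lt0x.
rewrite wt0 /gg (rk_bot grk) /qfact big_ord0 expr0 !mul1r; congr (_ + _).
apply: eq_big => y; first by rewrite lt0x andbC.
by move=> /andP [_ yx]; rewrite IH.
Qed.


Hypothesis simp : simplicial rk.

Lemma count_lt x : (x < \top)%O -> forall j, (j < rk x)%N ->
  #|[set y | (y < x)%O && (rk y == j)]| = 'C(rk x, j).
Proof.
move=> xt j jx; rewrite -(count_le grk simp xt j); apply: eq_card => y; rewrite !inE.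
rewrite lt_neqAle; case: (eqVneq y x) => [->|] //=.
by rewrite lexx (gtn_eqF jx).
Qed.

Lemma gg_eq m j : (j <= m)%N -> gg m.+1 j = qfact m * (1 - 'X)^+(m - j) * 'X^j.
Proof. by move=> jm; rewrite /gg mulrAC -qfact_prod //; ring. Qed.

Lemma Fx_val k : forall x, (rk x <= k)%N -> (x < \top)%O -> Fx rk x = qfact (rk x).
Proof.
elim: k => [|k IH] x hk xt.
  have -> : x = \bot%O by apply: (rk0 grk); apply/eqP; rewrite -leqn0.
  rewrite (Fx_rec grk) big_pred0; last by move=> y; rewrite ltx0 andbF.
  by rewrite wt0 (rk_bot grk) big_geq // addr0 /qfact big_ord0.
case: (eqVneq x \bot%O) => [->|xb].
  rewrite (Fx_rec grk) big_pred0; last by move=> y; rewrite ltx0 andbF.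
  by rewrite wt0 (rk_bot grk) big_geq // addr0 /qfact big_ord0.
rewrite Fx_sum //; last first.
  move=> y yx; apply: IH; last exact: lt_trans yx xt.
  by rewrite -ltnS; apply: leq_trans (rk_lt grk yx) hk.
have rx0 : (0 < rk x)%N by apply: (rk_gt0 grk); rewrite lt0x.
move: (count_lt xt) (rk_lt grk (x:=x)).
case Em: (rk x) rx0 => [//|m] _ hc hlt.
rewrite (@sum_by_rank m.+1 ord0 (fun y => (y < x)%O) (gg m.+1)); last exact: hlt.
transitivity (qfact m * \sum_(j < m.+1) ('C(m.+1, j))%:R * 'X^j * (1 - 'X)^+(m - j)).
  rewrite mulr_sumr; apply: eq_bigr => j _.
  rewrite hc // gg_eq; last by rewrite -ltnS.
  ring.
by rewrite qfactS -binom_qint.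
Qed.


Lemma count_top n : rk \top%O = n.+1 -> forall j : 'I_n.+1,
  #|[set y | (y < \top)%O && (rk y == j)]| = fnum rk j.
Proof.
move=> rt j; rewrite /fnum; case: eqP => [j0|jn0].
  rewrite j0; apply/eqP/cards1P; exists \bot%O; apply/setP=> y; rewrite !inE.
  apply/idP/idP.
    by move=> /andP [_ /eqP /(rk0 grk) ->].
  move/eqP->; rewrite (rk_bot grk) eqxx andbT lt0x; apply/eqP=> e.
  by move: rt; rewrite e (rk_bot grk).
apply: eq_card => y; rewrite !inE.
case: (eqVneq (rk y) j) => [e|]; last by rewrite andbF.
rewrite andbT ltx1; apply/eqP=> yt; move: (ltn_ord j); by rewrite -e yt rt ltnn.
Qed.

Lemma Fx_top n : rk \top%O = n.+1 -> Fx rk \top%O = qfact n * hpoly rk n.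
Proof.
move=> rt.
rewrite Fx_sum; first last.
- by move=> y yt; rewrite (Fx_val (leqnn _) yt).
- by apply/eqP=> e; move: rt; rewrite e (rk_bot grk).
have hlt y : (y < \top)%O -> (rk y < n.+1)%N by move/(rk_lt grk); rewrite rt.
rewrite rt (@sum_by_rank n.+1 ord0 (fun y => (y < \top)%O) (gg n.+1)); last exact: hlt.
rewrite /hpoly mulr_sumr; apply: eq_bigr => j _.
rewrite (count_top rt) gg_eq; last by rewrite -ltnS.
ring.
Qed.

End Main.
Local Open Scope ring_scope.

Definition tterm (k : nat) (m : int * seq bool) : {poly int} :=
  m.1%:P * \prod_(i < size m.2 | nth false m.2 i) 'X^(k + i.+1).
Definition ThetaK (k : nat) (p : ncpoly) : {poly int} := \sum_(m <- p) tterm k m.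

Lemma Theta0 p : Theta p = ThetaK 0 p.
Proof.
by apply: eq_bigr => m _; rewrite /tterm; congr (_ * _); apply: eq_bigr => i _; rewrite add0n.
Qed.

Lemma ThetaK_cat k p q : ThetaK k (p ++ q) = ThetaK k p + ThetaK k q.
Proof. by rewrite /ThetaK big_cat. Qed.

Definition bt (k : nat) (b : bool) : {poly int} := if b then 'X^(k.+1) else 1.

Lemma tterm_cons k c c' b w :
  tterm k (c * c', b :: w) = c%:P * bt k b * tterm k.+1 (c', w).
Proof.
rewrite /tterm /= polyCM !big_mkcond /= big_ord_recl /=.
rewrite [in RHS]big_mkcond /bt addn1.
have -> : \prod_(i < size w) (if nth false w (0 + i) then 'X^(k + (bump 0 i).+1) else 1)
   = \prod_(i < size w) (if nth false w i then 'X^(k.+1 + i.+1) else 1 : {poly int}).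
  by apply: eq_bigr => i _; rewrite add0n /bump /= add1n addSnnS.
case: b; ring.
Qed.

Lemma ThetaK_mul k p q : all (fun m => size m.2 == 1%N) p ->
  ThetaK k (nc_mul p q) = (\sum_(m <- p) m.1%:P * bt k (nth false m.2 0)) * ThetaK k.+1 q.
Proof.
move=> /allP hp; rewrite /ThetaK /nc_mul big_allpairs_dep big_distrl /=.
apply: eq_big_seq => m /hp /=; case: m => c [//|b [|//]] _ /=.
rewrite mulr_sumr; apply: eq_bigr => m' _; case: m' => c' w /=.
by rewrite tterm_cons.
Qed.

Lemma ThetaK_one k : ThetaK k nc_one = 1.
Proof. by rewrite /ThetaK /nc_one big_cons big_nil /tterm /= big_ord0 mulr1 addr0. Qed.

Definition vfac (b : bool) : ncpoly := if b then nc_b else nc_sub nc_a nc_b.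

Lemma ThetaK_vprod k (s : seq bool) :
  ThetaK k (nc_prod [seq vfac b | b <- s]) =
  \prod_(i < size s) (if nth false s i then 'X^(k + i.+1) else 1 - 'X^(k + i.+1)).
Proof.
elim: s k => [|b s IH] k; first by rewrite /= ThetaK_one big_ord0.
rewrite /= ThetaK_mul; last by case: b.
rewrite IH big_ord_recl /=.
have -> : \sum_(m <- vfac b) m.1%:P * bt k (nth false m.2 0) =
          (if b then 'X^(k + 1) else 1 - 'X^(k + 1)).
  case: b; rewrite /vfac /= !big_cons big_nil /bt /= addn1; ring.
congr (_ * _); apply: eq_bigr => i _; by rewrite /bump /= add1n addSnnS.
Qed.

Lemma ThetaK_sum k ps : ThetaK k (nc_sum ps) = \sum_(p <- ps) ThetaK k p.
Proof.
elim: ps => [|p ps IH]; first by rewrite /ThetaK /= !big_nil.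
by rewrite /= ThetaK_cat IH big_cons.
Qed.

Lemma ThetaK_scale k c p : ThetaK k (nc_scale c p) = c%:P * ThetaK k p.
Proof.
rewrite /ThetaK /nc_scale big_map mulr_sumr; apply: eq_bigr => m _.
by rewrite /tterm /= polyCM mulrA.
Qed.

Definition WW (n : nat) (A : {set 'I_n}) : {poly int} :=
  \prod_(i < n) (if i \in A then 'X^(i.+1) else 1 - 'X^(i.+1)).

Lemma Theta_vS n (A : {set 'I_n}) : ThetaK 0 (vS A) = WW A.
Proof.
have -> : vS A = nc_prod [seq vfac b | b <- [seq i \in A | i <- enum 'I_n]].
  by rewrite /vS -map_comp.
rewrite ThetaK_vprod /WW.
rewrite -(big_mkord xpredT (fun i => if nth false [seq i \in A | i <- enum 'I_n] i
   then 'X^(0 + i.+1) else 1 - 'X^(0 + i.+1))).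
rewrite size_map size_enum_ord big_mkord; apply: eq_bigr => i _.
by rewrite (nth_map i) ?size_enum_ord // nth_ord_enum add0n.
Qed.

Lemma Theta_abindex {d : Order.disp_t} {T : finTBPOrderType d} (rk : T -> nat) n :
  Theta (abindex rk n) = \sum_(A : {set 'I_n}) (fS rk A)%:R * WW A.
Proof.
rewrite Theta0 /abindex ThetaK_sum big_map big_enum /=.
apply: eq_bigr => A _; rewrite ThetaK_scale Theta_vS -natz polyC_natr //.
Qed.

Section Bij.
Local Open Scope order_scope.
Context {d : Order.disp_t} {T : finTBPOrderType d} (rk : T -> nat).
Hypothesis grk : graded rk.
Variable n : nat.
Hypothesis rt : rk \top = n.+1.

Definition RS (C : {set T}) : {set 'I_n} := [set i : 'I_n | [exists c in C, rk c == i.+1]].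

Lemma fS_count (A : {set 'I_n}) :
  fS rk A = #|[set C in chains \top | RS C == A]|.
Proof.
rewrite /fS.
set S := [set x : {ffun 'I_#|A| -> T} | _].
pose h (x : {ffun 'I_#|A| -> T}) : {set T} := [set y | [exists j, x j == y]].
have hS x : x \in S -> (forall j, (rk (x j) == (enum_val j).+1) && (\bot < x j) && (x j < \top))
    /\ (forall j j' : 'I_#|A|, (j < j')%N -> x j < x j').
  rewrite inE => /andP [/forallP h1 /forallP h2]; split=> // j j' jj.
  by move/forallP: (h2 j) => /(_ j') /implyP; apply.
have hinj : {in S &, injective h}.
  move=> x x' /hS [h1 _] /hS [h1' _] e; apply/ffunP=> j.
  have : x j \in h x' by rewrite -e inE; apply/existsP; exists j.
  rewrite inE => /existsP [j' /eqP ej'].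
  suff ejj : j = j' by rewrite -ej' ejj.
  apply: enum_val_inj; apply: val_inj; apply/eqP; rewrite -eqSS.
  move: (h1 j) (h1' j') => /andP [/andP [/eqP <- _] _] /andP [/andP [/eqP <- _] _].
  by rewrite ej'.
rewrite -(card_in_imset hinj); apply: eq_card => C.
apply/imsetP/idP.
  move=> [x xS ->]; have [h1 h2] := hS x xS.
  rewrite !inE; apply/andP; split.
    apply/andP; split.
      apply/subsetP=> y; rewrite !inE => /existsP [j /eqP <-].
      by move: (h1 j) => /andP [/andP [_ ->] ->].
    apply/forallP=> a; apply/implyP; rewrite inE => /existsP [j /eqP <-].
    apply/forallP=> b; apply/implyP; rewrite inE => /existsP [j' /eqP <-].
    case: (ltngtP j j') => [/h2 /ltW -> //|/h2 /ltW ->|/val_inj ->]; by rewrite ?orbT ?lexx.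
  apply/eqP/setP=> i; rewrite inE; apply/existsP/idP.
    move=> [c /andP [cC /eqP rc]]; move: cC; rewrite inE => /existsP [j /eqP ej].
    move: (h1 j) => /andP [/andP [/eqP rj _] _].
    have -> : i = enum_val j by apply: val_inj; apply/eqP; rewrite -eqSS -rj ej rc.
    exact: enum_valP.
  move=> iA; exists (x (enum_rank_in iA i)); rewrite inE; apply/andP; split.
    by apply/existsP; exists (enum_rank_in iA i).
  by move: (h1 (enum_rank_in iA i)) => /andP [/andP [/eqP -> _] _]; rewrite enum_rankK_in.
rewrite !inE => /andP [/andP [/subsetP sC ch] /eqP RSA].
have ex (j : 'I_#|A|) : exists c, (c \in C) && (rk c == (enum_val j).+1).
  have : enum_val j \in RS C by rewrite RSA enum_valP.
  by rewrite inE => /existsP [c hc]; exists c.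
pose x := [ffun j : 'I_#|A| => odflt \bot [pick c | (c \in C) && (rk c == (enum_val j).+1)]].
have xP (j : 'I_#|A|) : (x j \in C) && (rk (x j) == (enum_val j).+1).
  rewrite /x ffunE; case: pickP => [c //|none].
  by have [c hc] := ex j; rewrite none in hc.
have inC c : c \in C -> (\bot < c) && (c < \top) by move/sC; rewrite inE.
have cmp a b : a \in C -> b \in C -> (a <= b) || (b <= a).
  by move=> aC bC; move/forallP: ch => /(_ a) /implyP /(_ aC) /forallP /(_ b) /implyP /(_ bC).
exists x.
  rewrite inE; apply/andP; split.
    apply/forallP=> j; have /andP [xC ->] := xP j; by rewrite inC.
  apply/forallP=> j; apply/forallP=> j'; apply/implyP=> jj.
  have /andP [xC /eqP rj] := xP j; have /andP [xC' /eqP rj'] := xP j'.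
  have lt := enum_val_mono jj.
  move: (cmp _ _ xC xC') => /orP [hh|hh].
    rewrite lt_neqAle hh andbT; apply/eqP=> e; move: lt.
    by rewrite -ltnS -rj -rj' e ltnn.
  by move: (rk_le grk hh); rewrite rj rj' ltnS leqNgt lt.
apply/setP=> c; rewrite inE; apply/idP/existsP; last first.
  by move=> [j /eqP <-]; have /andP [] := xP j.
move=> cC; have /andP [c0 ct] := inC c cC.
have r0 := rk_gt0 grk c0.
have rn : ((rk c).-1 < n)%N by move: (rk_lt grk ct); rewrite rt -(prednK r0) ltnS.
pose i := Ordinal rn.
have iA : i \in A.
  by rewrite -RSA inE; apply/existsP; exists c; rewrite cC /= prednK.
exists (enum_rank_in iA i); apply/eqP.
have /andP [xC /eqP rj] := xP (enum_rank_in iA i).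
apply: (chain_eq grk (cmp _ _ xC cC)).
by rewrite rj enum_rankK_in //= prednK.
Qed.

End Bij.

Section Fin.
Context {d : Order.disp_t} {T : finTBPOrderType d} (rk : T -> nat).
Hypothesis grk : graded rk.
Variable n : nat.
Hypothesis rt : rk \top%O = n.+1.
Local Open Scope ring_scope.

Lemma Fx_top_W : Fx rk \top%O = \sum_(A : {set 'I_n}) (fS rk A)%:R * WW A.
Proof.
rewrite /Fx rt.
have wtE C : wt rk C n.+1 = WW (@RS d T rk n C).
  rewrite /wt big_add1 /= big_mkord /WW; apply: eq_bigr => i _; by rewrite /tm inE.
rewrite (eq_bigr _ (fun C _ => wtE C)).
rewrite (partition_big (fun C => @RS d T rk n C) predT) //=.
apply: eq_bigr => A _.
rewrite (fS_count grk rt A) mulr_natl -sumr_const; apply: eq_big => C.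
  by rewrite inE.
by move=> /andP [_ /eqP ->].
Qed.

End Fin.

Theorem mainTheorem3 (d : Order.disp_t) (T : finTBPOrderType d)
  (rk : T -> nat) (n : nat) :
  graded rk -> rk \top%O = n.+1 -> simplicial rk ->
  Theta (abindex rk n) = qfact n * hpoly rk n.
Proof.
move=> grk rt simp.
by rewrite Theta_abindex -(Fx_top_W grk rt) (Fx_top grk simp rt).
Qed.
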